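(* There is an absolute constant $C\ge0$ such that the following holds. Assume $\bar u\in\mathbb{R}^n_{>0}$, $f:[0,\bar u]\to\mathbb{R}$ is differentiable, nonnegative, DR-submodular with $L$-Lipschitz gradient, $\mathcal{P}\subseteq[0,\bar u]$ is nonempty compact convex down-closed with diameter $D$, and $x^*\in\arg\max_{x\in\mathcal{P}}f(x)$. Running the non-monotone Frank-Wolfe procedure (defined in the context) with step size $\gamma\in(0,1]$, for every $k=1,\dots,K$, $$f(x^{(k)})\ge t^{(k)}e^{-t^{(k)}}f(x^* )-\frac{LD^2}{2}k\gamma^2-C\gamma^2 f(x^* ).$$
   Context: Inequalities between vectors are componentwise. Down-closed: $x\in\mathcal{P}$, $0\le y\le x$ imply $y\in\mathcal{P}$; diameter $D=\max_{x,y\in\mathcal{P}}\|x-y\|$. DR-submodular: for all $a\le b$ in the domain, $i\in[n]$, $k\ge0$ with $a+ke_i,b+ke_i$ in the domain, $f(a+ke_i)-f(a)\ge f(b+ke_i)-f(b)$. $L$-Lipschitz gradient: $\|\nabla f(x)-\nabla f(y)\|\le L\|x-y\|$. Non-monotone Frank-Wolfe with step size $\gamma\in(0,1]$: $x^{(0)}=0$, $t^{(0)}=0$; while $t^{(k)}<1$: choose $v^{(k)}\in\arg\max\{\langle v,\nabla f(x^{(k)})\rangle: v\in\mathcal{P},\ v\le\bar u-x^{(k)}\}$, set $\gamma_k=\min\{\gamma,1-t^{(k)}\}$, $x^{(k+1)}=x^{(k)}+\gamma_k v^{(k)}$, $t^{(k+1)}=t^{(k)}+\gamma_k$. $K$ is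 the total number of iterations ($t^{(K)}=1$). *)

(* Defs.v *)
From Stdlib Require Import Reals.
From mathcomp Require Import all_boot.
Set Implicit Arguments.
Unset Strict Implicit.
Unset Printing Implicit Defensive.
Open Scope R_scope.

Definition vec (n : nat) := 'I_n -> R.

Definition vzero (n : nat) : vec n := fun _ => 0.
Arguments vzero n _ : clear implicits.
Definition vadd n (x y : vec n) : vec n := fun i => x i + y i.
Definition vsub n (x y : vec n) : vec n := fun i => x i - y i.
Definition vscale n (a : R) (x : vec n) : vec n := fun i => a * x i.

Definition dot n (x y : vec n) : R := \big[Rplus/0]_(i < n) (x i * y i).
Definition norm n (x : vec n) : R := sqrt (dot x x).

Definition vle n (x y : vec n) : Prop := forall i, x i <= y i.

Definition in_box n (u x : vec n) : Prop := vle (vzero n) x /\ vle x u.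

Definition shift n (x : vec n) (i : 'I_n) (k : R) : vec n :=
  fun j => if j == i then x j + k else x j.

Definition has_gradient n (u : vec n) (f : vec n -> R) (g : vec n -> vec n) : Prop :=
  forall x, in_box u x ->
  forall eps, 0 < eps -> exists delta, 0 < delta /\
    forall y, in_box u y -> norm (vsub y x) < delta ->
      Rabs (f y - f x - dot (g x) (vsub y x)) <= eps * norm (vsub y x).

Definition DR_submodular n (u : vec n) (f : vec n -> R) : Prop :=
  forall a b (i : 'I_n) (k : R),
    in_box u a -> in_box u b -> vle a b -> 0 <= k ->
    in_box u (shift a i k) -> in_box u (shift b i k) ->
    f (shift a i k) - f a >= f (shift b i k) - f b.

Definition lipschitz_grad n (u : vec n) (g : vec n -> vec n) (L : R) : Prop :=
  forall x y, in_box u x -> in_box u y ->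
    norm (vsub (g x) (g y)) <= L * norm (vsub x y).

Definition closed_set n (P : vec n -> Prop) : Prop :=
  forall (s : nat -> vec n) (x : vec n),
    (forall m, P (s m)) ->
    (forall eps, 0 < eps -> exists N, forall m, (N <= m)%nat -> norm (vsub (s m) x) < eps) ->
    P x.
Definition bounded_set n (P : vec n -> Prop) : Prop :=
  exists M, forall x, P x -> norm x <= M.
(* compact in R^n = closed and bounded (Heine-Borel) *)
Definition compact_set n (P : vec n -> Prop) : Prop := closed_set P /\ bounded_set P.
Definition convex_set n (P : vec n -> Prop) : Prop :=
  forall x y (lam : R), P x -> P y -> 0 <= lam <= 1 ->
    P (vadd (vscale lam x) (vscale (1 - lam) y)).
Definition down_closed n (P : vec n -> Prop) : Prop :=
  forall x y, P x -> vle (vzero n) y -> vle y x -> P y.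

Definition is_diameter n (P : vec n -> Prop) (D : R) : Prop :=
  (forall x y, P x -> P y -> norm (vsub x y) <= D) /\
  (exists x y, P x /\ P y /\ norm (vsub x y) = D).

Definition fw_run n (u : vec n) (P : vec n -> Prop) (g : vec n -> vec n)
  (gamma : R) (x : nat -> vec n) (v : nat -> vec n) (t : nat -> R) (K : nat) : Prop :=
  (forall i, x 0%nat i = 0) /\ t 0%nat = 0 /\
  (forall k, (k < K)%nat -> t k < 1) /\ t K = 1 /\
  (forall k, (k < K)%nat ->
     (P (v k) /\ vle (v k) (vsub u (x k)) /\
      (forall w, P w -> vle w (vsub u (x k)) ->
         dot w (g (x k)) <= dot (v k) (g (x k)))) /\
     (forall i, x (S k) i = x k i + Rmin gamma (1 - t k) * v k i) /\
     t (S k) = t k + Rmin gamma (1 - t k)).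

(* Main.v *)
Require Import Defs.
From Stdlib Require Import Reals Lra Psatz FunctionalExtensionality.
From Stdlib Require ZArith.
From mathcomp Require Import all_boot zify.
Open Scope R_scope.

Module V1.
Open Scope R_scope.
Set Implicit Arguments.

Lemma dot_ext n (a a' b b' : vec n) : (forall i, a i * b i = a' i * b' i) -> dot a b = dot a' b'.
Proof. move=> H; rewrite /dot; apply: eq_bigr => i _; apply: H. Qed.

Lemma sum_le n (F G : 'I_n -> R) : (forall i, F i <= G i) ->
  \big[Rplus/0]_(i < n) F i <= \big[Rplus/0]_(i < n) G i.
Proof.
move=> H; apply: (big_rec2 (fun a b => a <= b)); first lra.
move=> i y1 y2 _ Hy; have := H i; lra.
Qed.

Lemma sum_add n (F G : 'I_n -> R) :
  \big[Rplus/0]_(i < n) (F i + G i) = \big[Rplus/0]_(i < n) F i + \big[Rplus/0]_(i < n) G i.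
Proof.
apply: (big_rec3 (fun a b c => a = b + c)); first lra.
move=> i y1 y2 y3 _ ->; lra.
Qed.

Lemma sum_scale n (c : R) (F : 'I_n -> R) :
  \big[Rplus/0]_(i < n) (c * F i) = c * \big[Rplus/0]_(i < n) F i.
Proof.
apply: (big_rec2 (fun a b => a = c * b)); first lra.
move=> i y1 y2 _ ->; lra.
Qed.

Lemma sum_ge0 n (F : 'I_n -> R) : (forall i, 0 <= F i) -> 0 <= \big[Rplus/0]_(i < n) F i.
Proof. move=> H; apply: (big_ind (fun a => 0 <= a)) => //; [lra| move=> x y; lra]. Qed.

Lemma dot_ge0 n (a : vec n) : 0 <= dot a a.
Proof. apply: sum_ge0 => i; nra. Qed.

Lemma norm_ge0 n (a : vec n) : 0 <= norm a.
Proof. apply: sqrt_pos. Qed.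

Lemma dot_addr n (a b c : vec n) : dot a (fun i => b i + c i) = dot a b + dot a c.
Proof. rewrite /dot -sum_add; apply: eq_bigr => i _; lra. Qed.

Lemma dot_subl n (a b c : vec n) : dot (vsub a b) c = dot a c - dot b c.
Proof.
rewrite /dot.
have -> : \big[Rplus/0]_(i < n) (vsub a b i * c i) = \big[Rplus/0]_(i < n) (a i * c i + (-1) * (b i * c i)).
  by apply: eq_bigr => i _; rewrite /vsub; lra.
rewrite sum_add sum_scale; lra.
Qed.

Lemma dot_scaler n (a b : vec n) s : dot a (fun i => s * b i) = s * dot a b.
Proof. rewrite /dot -sum_scale; apply: eq_bigr => i _; lra. Qed.

Lemma dot_comm n (a b : vec n) : dot a b = dot b a.
Proof. apply: dot_ext => i; lra. Qed.

Lemma norm_scale n (w : vec n) s : norm (fun i => s * w i) = Rabs s * norm w.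
Proof.
rewrite /norm.
have -> : dot (fun i => s * w i) (fun i => s * w i) = (s * s) * dot w w.
  rewrite /dot -sum_scale; apply: eq_bigr => i _; lra.
rewrite sqrt_mult; [|nra|apply: dot_ge0].
rewrite -(sqrt_Rsqr_abs s) /Rsqr //.
Qed.

Lemma CS n (a b : vec n) : Rabs (dot a b) <= norm a * norm b.
Proof.
set A := dot a a; set B := dot b b; set Cc := dot a b.
have key : forall t, 0 <= A - 2 * t * Cc + t * t * B.
  move=> t.
  have : 0 <= dot (fun i => a i - t * b i) (fun i => a i - t * b i) by apply: dot_ge0.
  have -> : dot (fun i => a i - t * b i) (fun i => a i - t * b i)
     = dot a a + (-2 * t) * dot a b + (t * t) * dot b b.
    rewrite /dot -!sum_scale -!sum_add; apply: eq_bigr => i _; lra.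
  rewrite /A /B /Cc; lra.
have hA : 0 <= A by apply: dot_ge0.
have hB : 0 <= B by apply: dot_ge0.
have hC2 : Cc * Cc <= A * B.
  case: (Req_dec B 0) => hB0.
  - have : Cc = 0.
      case: (Req_dec Cc 0) => // hc.
      have := key ((A + 1) / (2 * Cc)).
      rewrite hB0.
      have -> : 2 * ((A + 1) / (2 * Cc)) * Cc = A + 1 by field.
      lra.
    move=> ->; nra.
  - have hBp : 0 < B by lra.
    have := key (Cc / B).
    have -> : A - 2 * (Cc / B) * Cc + Cc / B * (Cc / B) * B = A - Cc * Cc / B by field; lra.
    move=> h.
    have : Cc * Cc / B <= A by lra.
    move=> h2.
    have := Rmult_le_compat_r B _ _ (Rlt_le _ _ hBp) h2.
    have -> : Cc * Cc / B * B = Cc * Cc by field; lra.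
    lra.
rewrite /norm -/A -/B -sqrt_mult // -(sqrt_Rsqr_abs Cc).
apply: sqrt_le_1_alt; rewrite /Rsqr; lra.
Qed.

End V1.
Import V1.

Module V2.
Open Scope R_scope.

Lemma box_between n (u lo hi y : vec n) : in_box u lo -> in_box u hi ->
  (forall i, lo i <= y i <= hi i) -> in_box u y.
Proof.
move=> [hl1 hl2] [hh1 hh2] H; split => i; rewrite /vzero;
  have := hl1 i; have := hh2 i; have := H i; rewrite /vzero; lra.
Qed.

Lemma DRvec n (u : vec n) f (hDR : DR_submodular u f) (a b d : vec n) :
  in_box u a -> in_box u b -> vle a b -> vle (vzero n) d ->
  in_box u (vadd a d) -> in_box u (vadd b d) ->
  f (vadd a d) - f a >= f (vadd b d) - f b.
Proof.
move=> ha hb hab hd had hbd.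
pose pv (m : nat) : vec n := fun j => if (j < m)%nat then d j else 0.
have hpv : forall m j, 0 <= pv m j <= d j.
  move=> m j; rewrite /pv; have := hd j; rewrite /vzero; case: (j < m)%nat; lra.
have boxa : forall m, in_box u (vadd a (pv m)).
  move=> m; apply: (box_between _ _ _ _ _ ha had) => i; rewrite /vadd; have := hpv m i; lra.
have boxb : forall m, in_box u (vadd b (pv m)).
  move=> m; apply: (box_between _ _ _ _ _ hb hbd) => i; rewrite /vadd; have := hpv m i; lra.
have step : forall m (H : (m < n)%nat) (c : vec n),
    vadd c (pv m.+1) = shift (vadd c (pv m)) (Ordinal H) (d (Ordinal H)).
  move=> m H c; apply: functional_extensionality => j.
  rewrite /vadd /pv /shift.
  case: eqP => [->|hne] /=.
  - rewrite ltnSn ltnn; lra.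
  - have -> : (j < m.+1)%nat = (j < m)%nat.
      have : (nat_of_ord j) <> m by move=> e; apply: hne; apply: val_inj.
      move=> e; rewrite ltnS leq_eqVlt; case: eqP => //.
    done.
have claim : forall m, (m <= n)%nat ->
    f (vadd a (pv m)) - f a >= f (vadd b (pv m)) - f b.
  elim=> [|m IH] hm.
  - have e : forall c : vec n, vadd c (pv 0%nat) = c.
      move=> c; apply: functional_extensionality => j; rewrite /vadd /pv /=; lra.
    rewrite !e; lra.
  - have hmn : (m < n)%nat by [].
    have := IH (ltnW hmn).
    rewrite !(step m hmn).
    have := hDR (vadd a (pv m)) (vadd b (pv m)) (Ordinal hmn) (d (Ordinal hmn))
      (boxa m) (boxb m).
    move=> h1 h2.
    have h3 : vle (vadd a (pv m)) (vadd b (pv m)) by move=> i; rewrite /vadd; have := hab i; lra.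
    have h4 : 0 <= d (Ordinal hmn) by have := hd (Ordinal hmn); rewrite /vzero.
    have := h1 h3 h4; rewrite -!(step m hmn).
    move=> h5; have := h5 (boxa _) (boxb _); lra.
have e : forall c : vec n, vadd c (pv n) = vadd c d.
  move=> c; apply: functional_extensionality => j; rewrite /vadd /pv ltn_ord //.
have := claim n (leqnn n); rewrite !e //.
Qed.

End V2.
Import V2.

Module V3.
Import ZArith.
Open Scope R_scope.
Set Implicit Arguments.

Lemma big_nat (r : R) : exists N : nat, (1 <= N)%nat /\ r < INR N.
Proof.
have [h1 _] := archimed r.
case: (Rle_lt_dec (IZR (up r)) 0) => h.
- exists 1%nat; split => //; rewrite INR_1; lra.
- exists (Z.to_nat (up r)); split.
  + have : (0 < up r)%Z by apply: lt_IZR.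
    lia.
  + rewrite INR_IZR_INZ Z2Nat.id //; apply: le_IZR; lra.
Qed.

Lemma approx_le a b c : 0 <= c -> (forall eps, 0 < eps -> a <= b + eps * c) -> a <= b.
Proof.
move=> hc H; case: (Rle_lt_dec a b) => // hab.
have := H ((a - b) / (2 * (c + 1))).
have hpos : 0 < (a - b) / (2 * (c + 1)) by apply: Rdiv_lt_0_compat; lra.
move=> /(_ hpos) h.
have : (a - b) / (2 * (c + 1)) * c <= (a - b) / 2.
  have -> : (a - b) / 2 = (a - b) / (2 * (c + 1)) * (c + 1) by field; lra.
  nra.
lra.
Qed.

Lemma abs_le_inv x b : Rabs x <= b -> - b <= x <= b.
Proof. move=> h; have := Rle_abs x; have := Rle_abs (- x); rewrite Rabs_Ropp; lra. Qed.

Definition pt n (y w : vec n) (s : R) : vec n := fun i => y i + s * w i.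

Lemma pt_box n (u y z : vec n) s : in_box u y -> in_box u z -> vle y z -> 0 <= s <= 1 ->
  in_box u (pt y (vsub z y) s).
Proof.
move=> hy hz hyz hs; apply: (box_between _ _ _ _ _ hy hz) => i; rewrite /pt /vsub.
have := hyz i; nra.
Qed.

Lemma pt_add n (y w : vec n) s h : vadd (pt y w s) (fun i => h * w i) = pt y w (s + h).
Proof. apply: functional_extensionality => i; rewrite /vadd /pt; lra. Qed.

Lemma pt0 n (y w : vec n) : pt y w 0 = y.
Proof. apply: functional_extensionality => i; rewrite /pt; lra. Qed.

Lemma pt1 n (y z : vec n) : pt y (vsub z y) 1 = z.
Proof. apply: functional_extensionality => i; rewrite /pt /vsub; lra. Qed.

Lemma pt_sub n (y w : vec n) s s' i : vsub (pt y w s) (pt y w s') i = (s - s') * w i.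
Proof. rewrite /vsub /pt; lra. Qed.

Lemma norm_ext n (a b : vec n) : (forall i, a i = b i) -> norm a = norm b.
Proof. by move=> H; rewrite (functional_extensionality _ _ H). Qed.

Section S.
Variables (n : nat) (u : vec n) (f : vec n -> R) (g : vec n -> vec n).
Hypothesis hg : has_gradient u f g.
Hypothesis hDR : DR_submodular u f.

Lemma L1 (y z : vec n) : in_box u y -> in_box u z -> vle y z ->
  f z - f y <= dot (g y) (vsub z y).
Proof.
move=> hy hz hyz.
set w := vsub z y.
have hw : vle (vzero n) w by move=> i; rewrite /w /vsub /vzero; have := hyz i; lra.
apply: (approx_le (norm_ge0 w)) => eps heps.
have [del [hdel H]] := hg hy heps.
have [N [hN1 hN]] := big_nat (norm w / del).
have hNp : 0 < INR N by apply: lt_0_INR; lia.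
set h := / INR N.
have hh : 0 < h by apply: Rinv_0_lt_compat.
have hNh : INR N * h = 1 by rewrite /h; field; lra.
have hbox : forall s, 0 <= s <= 1 -> in_box u (pt y w s) by move=> s hs; exact: pt_box.
have claim : forall m, (m <= N)%nat -> f (pt y w (INR m * h)) - f y <= INR m * (f (pt y w h) - f y).
  elim=> [|m IH] hm.
  - rewrite /= Rmult_0_l pt0; lra.
  - have hm' : (m <= N)%nat by lia.
    have hmN : INR m.+1 <= INR N by apply: le_INR; lia.
    have hmN' : INR m <= INR N by apply: le_INR; lia.
    have hm0 : 0 <= INR m by apply: pos_INR.
    have e1 : INR m * h <= INR N * h by apply: Rmult_le_compat_r; lra.
    have e2 : INR m.+1 * h <= INR N * h by apply: Rmult_le_compat_r; lra.
    have e3 : 1 <= INR m.+1 by rewrite S_INR; lra.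
    have b1 : in_box u (pt y w (INR m * h)) by apply: hbox; split; nra.
    have b2 : in_box u (pt y w h) by apply: hbox; split; nra.
    have b3 : in_box u (pt y w (INR m.+1 * h)) by apply: hbox; split; nra.
    have l1 : vle y (pt y w (INR m * h)).
      move=> i; rewrite /pt; have := hw i; rewrite /vzero => hwi.
      have : 0 <= INR m * h by nra.
      idtac.
      nra.
    have l2 : vle (vzero n) (fun i => h * w i) by move=> i; have := hw i; rewrite /vzero; nra.
    have ey : vadd y (fun i => h * w i) = pt y w h.
      by rewrite -{1}(pt0 y w) pt_add Rplus_0_l.
    have ez : vadd (pt y w (INR m * h)) (fun i => h * w i) = pt y w (INR m.+1 * h).
      by rewrite pt_add S_INR; f_equal; lra.
    have := @DRvec _ _ _ hDR y (pt y w (INR m * h)) (fun i => h * w i) hy b1 l1 l2.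
    rewrite ey ez => H1.
    have := H1 b2 b3.
    have := IH hm'; rewrite S_INR; lra.
have := claim N (leqnn N); rewrite hNh pt1.
have hn : norm (vsub (pt y w h) y) = h * norm w.
  rewrite (@norm_ext _ _ (fun i => h * w i)); last by move=> i; rewrite /vsub /pt; lra.
  rewrite norm_scale Rabs_pos_eq //; lra.
have hd : dot (g y) (vsub (pt y w h) y) = h * dot (g y) w.
  rewrite -dot_scaler; apply: dot_ext => i; rewrite /vsub /pt; lra.
have hlt : norm (vsub (pt y w h) y) < del.
  rewrite hn /h.
  have := norm_ge0 w => hw0.
  apply: (Rmult_lt_reg_l (INR N)) => //.
  have -> : INR N * (/ INR N * norm w) = norm w by field; lra.
  have : norm w / del * del < INR N * del by apply: Rmult_lt_compat_r.
  have -> : norm w / del * del = norm w by field; lra.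
  lra.
have := H _ (hbox h ltac:(split; [lra| rewrite /h; rewrite -(Rinv_1); apply: Rinv_le_contravar; [lra| rewrite -INR_1; apply: le_INR; lia]])) hlt.
rewrite hn hd => /abs_le_inv [_ ha].
move=> hc.
have : INR N * (f (pt y w h) - f y) <= INR N * (h * dot (g y) w + eps * (h * norm w)).
  apply: Rmult_le_compat_l; lra.
have -> : INR N * (h * dot (g y) w + eps * (h * norm w)) = dot (g y) w + eps * norm w.
  rewrite /h; field; lra.
rewrite /w in hc *; lra.
Qed.

Lemma L2 (y z : vec n) : in_box u y -> in_box u z -> vle y z ->
  f z - f y >= dot (g z) (vsub z y).
Proof.
move=> hy hz hyz.
set w := vsub z y.
have hw : vle (vzero n) w by move=> i; rewrite /w /vsub /vzero; have := hyz i; lra.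
apply: Rle_ge.
suff : dot (g z) w - (f z - f y) <= 0 by lra.
apply: (approx_le (norm_ge0 w)) => eps heps.
have [del [hdel H]] := hg hz heps.
have [N [hN1 hN]] := big_nat (norm w / del).
have hNp : 0 < INR N by apply: lt_0_INR; lia.
set h := / INR N.
have hh : 0 < h by apply: Rinv_0_lt_compat.
have hNh : INR N * h = 1 by rewrite /h; field; lra.
set M := (N - 1)%nat.
have hMN : INR M * h + h = 1.
  rewrite /M minus_INR; last by lia.
  rewrite INR_1; lra.
have hM0 : 0 <= INR M * h by apply: Rmult_le_pos; [apply: pos_INR| lra].
have hbox : forall s, 0 <= s <= 1 -> in_box u (pt y w s) by move=> s hs; exact: pt_box.
have eN : pt y w (INR M * h + h) = z by rewrite hMN pt1.
set D := f z - f (pt y w (INR M * h)).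
have claim : forall m, (m <= N)%nat -> f (pt y w (INR m * h)) - f y >= INR m * D.
  elim=> [|m IH] hm.
  - rewrite /= !Rmult_0_l pt0; lra.
  - have hm' : (m <= N)%nat by lia.
    have hmM : INR m <= INR M by apply: le_INR; rewrite /M; lia.
    have hm0 : 0 <= INR m by apply: pos_INR.
    have e1 : INR m * h <= INR M * h by apply: Rmult_le_compat_r; lra.
    have b1 : in_box u (pt y w (INR m * h)) by apply: hbox; split; nra.
    have b2 : in_box u (pt y w (INR M * h)) by apply: hbox; split; nra.
    have b3 : in_box u (pt y w (INR m.+1 * h)) by apply: hbox; rewrite S_INR; split; nra.
    have l1 : vle (pt y w (INR m * h)) (pt y w (INR M * h)).
      move=> i; rewrite /pt; have := hw i; rewrite /vzero => hwi.
      have : 0 <= (INR M * h - INR m * h) * w i by nra.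
      nra.
    have l2 : vle (vzero n) (fun i => h * w i).
      move=> i; have := hw i; rewrite /vzero => hwi; nra.
    have ea : vadd (pt y w (INR m * h)) (fun i => h * w i) = pt y w (INR m.+1 * h).
      by rewrite pt_add S_INR; f_equal; lra.
    have eb : vadd (pt y w (INR M * h)) (fun i => h * w i) = z by rewrite pt_add.
    have := @DRvec _ _ _ hDR (pt y w (INR m * h)) (pt y w (INR M * h)) (fun i => h * w i) b1 b2 l1 l2.
    rewrite ea eb => H1.
    have := H1 b3 hz.
    have := IH hm'; rewrite S_INR /D; lra.
have := claim N (leqnn N); rewrite hNh pt1.
have hn : norm (vsub (pt y w (INR M * h)) z) = h * norm w.
  rewrite (@norm_ext _ _ (fun i => (- h) * w i)); last first.
    move=> i; rewrite -eN /vsub /pt; lra.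
  rewrite norm_scale Rabs_left; lra.
have hd : dot (g z) (vsub (pt y w (INR M * h)) z) = - h * dot (g z) w.
  rewrite -dot_scaler; apply: dot_ext => i; rewrite -eN /vsub /pt; lra.
have hlt : norm (vsub (pt y w (INR M * h)) z) < del.
  rewrite hn /h.
  have := norm_ge0 w => hw0.
  apply: (Rmult_lt_reg_l (INR N)) => //.
  have -> : INR N * (/ INR N * norm w) = norm w by field; lra.
  have : norm w / del * del < INR N * del by apply: Rmult_lt_compat_r.
  have -> : norm w / del * del = norm w by field; lra.
  lra.
have := H _ (hbox (INR M * h) ltac:(lra)) hlt.
rewrite hn hd => /abs_le_inv [_ ha].
move=> hc.
have : INR N * D >= INR N * (h * dot (g z) w - eps * (h * norm w)).
  apply: Rle_ge; apply: Rmult_le_compat_l; rewrite /D; lra.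
have -> : INR N * (h * dot (g z) w - eps * (h * norm w)) = dot (g z) w - eps * norm w.
  rewrite /h; field; lra.
rewrite /w in hc *; lra.
Qed.
End S.

Section D.
Variables (n : nat) (u : vec n) (f : vec n -> R) (g : vec n -> vec n) (L : R).
Hypothesis hg : has_gradient u f g.
Hypothesis hDR : DR_submodular u f.
Hypothesis hL : lipschitz_grad u g L.
Hypothesis hL0 : 0 <= L.

Lemma descent (x z : vec n) : in_box u x -> in_box u z -> vle x z ->
  f z - f x >= dot (g x) (vsub z x) - L / 2 * (norm (vsub z x) * norm (vsub z x)).
Proof.
move=> hx hz hxz.
set w := vsub z x.
set W := norm w.
set D0 := dot (g x) w.
have hW : 0 <= W by apply: norm_ge0.
have hw : vle (vzero n) w by move=> i; rewrite /w /vsub /vzero; have := hxz i; lra.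
have hbox : forall s, 0 <= s <= 1 -> in_box u (pt x w s) by move=> s hs; exact: pt_box.
have claimN : forall N : nat, (1 <= N)%nat ->
    f z - f x >= D0 - L * (W * W) * (INR N + 1) / (2 * INR N).
  move=> N hN1.
  have hNp : 0 < INR N by apply: lt_0_INR; lia.
  set h := / INR N.
  have hh : 0 < h by apply: Rinv_0_lt_compat.
  have hNh : INR N * h = 1 by rewrite /h; field; lra.
  have claim : forall m, (m <= N)%nat ->
      f (pt x w (INR m * h)) - f x >= INR m * h * D0 - L * (h * h) * (W * W) * (INR m * (INR m + 1) / 2).
    elim=> [|m IH] hm.
    - rewrite /= !Rmult_0_l pt0; lra.
    - have hm' : (m <= N)%nat by lia.
      have hmN : INR m.+1 <= INR N by apply: le_INR; lia.
      have hm0 : 0 <= INR m by apply: pos_INR.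
      have e2 : INR m.+1 * h <= INR N * h by apply: Rmult_le_compat_r; lra.
      have e3 : 1 <= INR m.+1 by rewrite S_INR; lra.
      have e1 : INR m * h <= INR m.+1 * h by rewrite S_INR; lra.
      have b1 : in_box u (pt x w (INR m * h)) by apply: hbox; split; nra.
      have b3 : in_box u (pt x w (INR m.+1 * h)) by apply: hbox; split; nra.
      have l1 : vle (pt x w (INR m * h)) (pt x w (INR m.+1 * h)).
        move=> i; rewrite /pt; have := hw i; rewrite /vzero => hwi.
        have : 0 <= (INR m.+1 * h - INR m * h) * w i by nra.
        nra.
      have H2 := L2 hg hDR b1 b3 l1.
      set p := pt x w (INR m.+1 * h) in H2 b3 *.
      have ed : dot (g p) (vsub p (pt x w (INR m * h))) = h * dot (g p) w.
        rewrite -dot_scaler; apply: dot_ext => i; rewrite /p pt_sub S_INR; lra.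
      have ed2 : dot (g p) w = D0 + dot (vsub (g p) (g x)) w.
        rewrite dot_subl /D0; lra.
      have cs := CS (vsub (g p) (g x)) w.
      have lip := hL b3 hx.
      have hpx : norm (vsub p x) = INR m.+1 * h * W.
        rewrite (@norm_ext _ _ (fun i => (INR m.+1 * h) * w i)); last first.
          by move=> i; rewrite /p -{2}(pt0 x w) pt_sub; lra.
        rewrite norm_scale Rabs_pos_eq //; apply: Rmult_le_pos; lra.
      rewrite hpx in lip.
      have hcs : dot (vsub (g p) (g x)) w >= - (L * (INR m.+1 * h * W) * W).
        have h1 := Rle_abs (- dot (vsub (g p) (g x)) w); rewrite Rabs_Ropp in h1.
        have : norm (vsub (g p) (g x)) * W <= L * (INR m.+1 * h * W) * W.
          apply: Rmult_le_compat_r => //.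
        rewrite /W in cs *; lra.
      have := IH hm'.
      rewrite ed ed2 in H2.
      have : h * (D0 + dot (vsub (g p) (g x)) w) >= h * D0 - h * (L * (INR m.+1 * h * W) * W).
        apply: Rle_ge; rewrite Rmult_plus_distr_l; apply: Rplus_le_compat_l.
        have -> : - (h * (L * (INR m.+1 * h * W) * W)) = h * - (L * (INR m.+1 * h * W) * W) by ring.
        apply: Rmult_le_compat_l; lra.
      rewrite S_INR; move=> A B.
      have -> : (INR m + 1) * h * D0 - L * (h * h) * (W * W) * ((INR m + 1) * (INR m + 1 + 1) / 2)
         = (INR m * h * D0 - L * (h * h) * (W * W) * (INR m * (INR m + 1) / 2))
           + (h * D0 - h * (L * ((INR m + 1) * h * W) * W)) by field.
      lra.
  have ez : pt x w (INR N * h) = z by rewrite hNh pt1.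
  have := claim N (leqnn N); rewrite ez.
  have -> : INR N * h * D0 - L * (h * h) * (W * W) * (INR N * (INR N + 1) / 2)
          = D0 - L * (W * W) * (INR N + 1) / (2 * INR N).
    rewrite /h; field; lra.
  done.
apply: Rle_ge.
suff : D0 - L / 2 * (W * W) - (f z - f x) <= 0 by rewrite /D0 /W /w; lra.
apply: (approx_le (c := L / 2 * (W * W))); first by nra.
move=> eps heps.
have [N [hN1 hN]] := big_nat (/ eps).
have hNp : 0 < INR N by apply: lt_0_INR; lia.
have := claimN N hN1.
have -> : D0 - L * (W * W) * (INR N + 1) / (2 * INR N) = D0 - L / 2 * (W * W) - L / 2 * (W * W) * / INR N.
  field; lra.
have : / INR N <= eps.
  rewrite -(Rinv_inv eps); apply: Rinv_le_contravar; [apply: Rinv_0_lt_compat|]; lra.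
have : 0 <= L / 2 * (W * W) by nra.
nra.
Qed.
End D.

End V3.
Import V3.

Module V4.
Open Scope R_scope.
Set Implicit Arguments.

Section C.
Variables (n : nat) (u : vec n) (f : vec n -> R) (g : vec n -> vec n).
Hypothesis hg : has_gradient u f g.
Hypothesis hDR : DR_submodular u f.
Hypothesis hf0 : forall y, in_box u y -> 0 <= f y.

Lemma conc (xs x : vec n) rho : in_box u xs -> in_box u x -> 0 <= rho <= 1 ->
  (forall i, x i <= (1 - rho) * u i) ->
  f (fun i => Rmax (x i) (xs i)) >= rho * f xs.
Proof.
move=> hxs hx hr hxr.
have [hxs0 hxsu] := hxs; have [hx0 hxu] := hx.
case: (Req_dec rho 1) => hr1.
- have -> : (fun i => Rmax (x i) (xs i)) = xs.
    apply: functional_extensionality => i.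
    have := hxr i; have := hx0 i; rewrite /vzero hr1 => h1 h2.
    rewrite Rmax_right //; have := hxs0 i; rewrite /vzero; lra.
  rewrite hr1; lra.
set th := 1 - rho.
have hth : 0 < th <= 1 by rewrite /th; lra.
set d : vec n := fun i => (Rmax (x i) (xs i) - xs i) / th.
set y' : vec n := fun i => xs i + th * d i.
set z : vec n := fun i => xs i + d i.
have ey : (fun i => Rmax (x i) (xs i)) = y'.
  apply: functional_extensionality => i; rewrite /y' /d; field; lra.
have hd0 : forall i, 0 <= d i.
  move=> i; rewrite /d; apply: Rmult_le_pos; last by apply: Rlt_le; apply: Rinv_0_lt_compat; lra.
  have := Rmax_r (x i) (xs i); lra.
have hdu : forall i, xs i + d i <= u i.
  move=> i; rewrite /d.
  have := hxr i; have := hxs0 i; have := hxsu i; rewrite /vzero -/th => h1 h2 h3.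
  rewrite /Rmax; case: Rle_dec => hm.
  + have -> : (xs i - xs i) / th = 0 by field; lra.
    lra.
  + have -> : xs i + (x i - xs i) / th = (x i - xs i + th * xs i) / th by field; lra.
    apply: (Rmult_le_reg_l th); first lra.
    have -> : th * ((x i - xs i + th * xs i) / th) = x i - xs i + th * xs i by field; lra.
    nra.
have bz : in_box u z.
  split => i; rewrite /z /vzero; [have := hxs0 i; have := hd0 i; rewrite /vzero; lra| exact: hdu].
have by' : in_box u y'.
  rewrite -ey; split => i; rewrite /vzero.
  - have := hx0 i; rewrite /vzero; have := Rmax_l (x i) (xs i); lra.
  - apply: Rmax_lub; [exact: hxu | exact: hxsu].
have l1 : vle xs y' by move=> i; rewrite /y'; have := hd0 i; nra.
have l2 : vle y' z by move=> i; rewrite /y' /z; have := hd0 i; nra.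
have H2 := L2 hg hDR hxs by' l1.
have H1 := L1 hg hDR by' bz l2.
have e2 : dot (g y') (vsub y' xs) = th * dot (g y') d.
  rewrite -dot_scaler; apply: dot_ext => i; rewrite /vsub /y'; lra.
have e1 : dot (g y') (vsub z y') = (1 - th) * dot (g y') d.
  rewrite -dot_scaler; apply: dot_ext => i; rewrite /vsub /y' /z; lra.
rewrite e2 in H2; rewrite e1 in H1.
rewrite ey.
have fz := hf0 bz.
have A : (1 - th) * (f y' - f xs) >= (1 - th) * (th * dot (g y') d).
  apply: Rle_ge; apply: Rmult_le_compat_l; lra.
have B : th * (f z - f y') <= th * ((1 - th) * dot (g y') d).
  apply: Rmult_le_compat_l; lra.
have : th * f z >= 0 by nra.
rewrite /th in A B * ; nra.
Qed.
End C.

Lemma step_ineq n (u : vec n) (f : vec n -> R) (g : vec n -> vec n) (L : R)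
  (P : vec n -> Prop) (D : R) (xs x v : vec n) (c rho : R) :
  has_gradient u f g -> DR_submodular u f -> (forall y, in_box u y -> 0 <= f y) ->
  lipschitz_grad u g L -> 0 <= L ->
  (forall y, P y -> in_box u y) -> down_closed P ->
  (forall a b, P a -> P b -> norm (vsub a b) <= D) ->
  P xs -> in_box u x -> P v -> vle v (vsub u x) ->
  (forall w, P w -> vle w (vsub u x) -> dot w (g x) <= dot v (g x)) ->
  0 <= c <= 1 -> 0 <= rho <= 1 -> (forall i, x i <= (1 - rho) * u i) ->
  f (fun i => x i + c * v i) >= (1 - c) * f x + c * rho * f xs - L * (c * c) * (D * D) / 2.
Proof.
move=> hg hDR hf0 hL hL0 hP hdc hD hxs hx hv hvu hmax hc hr hxr.
have [hx0 hxu] := hx.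
have [hv0 hvu'] := hP _ hv.
have [hxs0 hxsu] := hP _ hxs.
set y : vec n := fun i => x i + c * v i.
have by' : in_box u y.
  split => i; rewrite /y /vzero.
  - have := hx0 i; have := hv0 i; rewrite /vzero; nra.
  - have := hvu i; rewrite /vsub => h; have := hv0 i; rewrite /vzero; nra.
have lxy : vle x y by move=> i; rewrite /y; have := hv0 i; rewrite /vzero; nra.
have Hd := descent hg hDR hL hL0 hx by' lxy.
have ed : dot (g x) (vsub y x) = c * dot v (g x).
  rewrite dot_comm -dot_scaler; apply: dot_ext => i; rewrite /vsub /y; lra.
have en : norm (vsub y x) = c * norm v.
  rewrite (@norm_ext _ _ (fun i => c * v i)); last by move=> i; rewrite /vsub /y; lra.
  rewrite norm_scale Rabs_pos_eq //; lra.
rewrite ed en in Hd.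
have P0 : P (vzero n).
  apply: (hdc xs) => //; first by move=> i; rewrite /vzero; lra.
have hnv : norm v <= D.
  have := hD _ _ hv P0.
  by rewrite (@norm_ext _ (vsub v (vzero n)) v) // => i; rewrite /vsub /vzero; lra.
have hnv0 := norm_ge0 v.
set w : vec n := fun i => Rmax (x i) (xs i) - x i.
have hw0 : forall i, 0 <= w i by move=> i; rewrite /w; have := Rmax_l (x i) (xs i); lra.
have Pw : P w.
  apply: (hdc xs) => //.
  - move=> i; rewrite /w /=; have hxi : 0 <= x i := hx0 i; have hxsi : 0 <= xs i := hxs0 i; rewrite /Rmax; case: Rle_dec => hh; lra.
have wu : vle w (vsub u x).
  move=> i; rewrite /w /vsub /=; have h1 := hxu i; have h2 := hxsu i; rewrite /Rmax; case: Rle_dec => hh; lra.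
have hmw := hmax _ Pw wu.
have bm : in_box u (fun i => Rmax (x i) (xs i)).
  split => i; rewrite /vzero.
  - have := hx0 i; rewrite /vzero; have := Rmax_l (x i) (xs i); lra.
  - apply: Rmax_lub; [exact: hxu | exact: hxsu].
have lxm : vle x (fun i => Rmax (x i) (xs i)) by move=> i; exact: Rmax_l.
have H1 := L1 hg hDR hx bm lxm.
have ew : dot (g x) (vsub (fun i => Rmax (x i) (xs i)) x) = dot w (g x).
  rewrite dot_comm; apply: dot_ext => i; rewrite /vsub /w; lra.
rewrite ew in H1.
have Hc := conc hg hDR hf0 (hP _ hxs) hx hr hxr.
have A : c * (rho * f xs - f x) <= c * dot v (g x).
  apply: Rmult_le_compat_l; lra.
have B : L / 2 * (c * norm v * (c * norm v)) <= L * (c * c) * (D * D) / 2.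
  have : norm v * norm v <= D * D by nra.
  have : 0 <= L * (c * c) by nra.
  nra.
lra.
Qed.

End V4.
Import V4.

Module V5.
Open Scope R_scope.

Lemma exp_pow_nat a m : exp a ^ m = exp (INR m * a).
Proof.
elim: m => [|m IH]; first by rewrite /= Rmult_0_l exp_0.
rewrite -tech_pow_Rmult IH -exp_plus S_INR; f_equal; lra.
Qed.

Lemma one_minus_ge g : 0 < g <= 1/5 -> exp (- (g * (1 + g))) <= 1 - g.
Proof.
move=> hg.
set a := g * (1 + g).
have ha : 0 <= a by rewrite /a; nra.
have h1 : 1 + a / 2 <= exp (a / 2) by apply: exp_ineq1_le.
have h2 : exp a = exp (a / 2) * exp (a / 2) by rewrite -exp_plus; f_equal; lra.
have h3 : (1 + a / 2) * (1 + a / 2) <= exp a by rewrite h2; nra.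
have h4 : 1 <= (1 - g) * exp a.
  have : 1 <= (1 - g) * ((1 + a / 2) * (1 + a / 2)) by rewrite /a; nra.
  have : (1 - g) * ((1 + a / 2) * (1 + a / 2)) <= (1 - g) * exp a by apply: Rmult_le_compat_l; lra.
  lra.
have e : exp (- a) * exp a = 1 by rewrite -exp_plus; rewrite Rplus_opp_l exp_0.
have hp := exp_pos (- a).
nra.
Qed.

Lemma exp_mono a b : a <= b -> exp a <= exp b.
Proof. case/Rle_lt_or_eq_dec => h; [apply: Rlt_le; exact: exp_increasing | by rewrite h; lra]. Qed.

Lemma pow_exp g m : 0 < g <= 1/5 -> INR m * g <= 1 -> exp (- ((INR m + 1) * g)) <= (1 - g) ^ m.
Proof.
move=> hg hm.
apply: Rle_trans (pow_incr (exp (- (g * (1 + g)))) (1 - g) m _ ); last first.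
  split; [apply: Rlt_le; exact: exp_pos | exact: one_minus_ge].
rewrite exp_pow_nat; apply: exp_mono.
have : 0 <= INR m by apply: pos_INR.
nra.
Qed.

Lemma final_real g s : 0 < g -> 0 <= s <= 1 -> 1 - s <= g ->
  exp (-1) - g * g <= exp (- s) * (s * s + (1 - s) * (1 - g)).
Proof.
move=> hg hs hd.
set d := 1 - s.
have e : exp (- s) = exp (-1) * exp d by rewrite -exp_plus /d; f_equal; lra.
have h1 : 1 + d <= exp d by apply: exp_ineq1_le.
have h2 : exp (- s) <= 1 by rewrite -exp_0; apply: exp_mono; lra.
have h3 := exp_pos (-1).
have h4 := exp_pos (- s).
have A : exp (-1) <= exp (- s) * (1 - d + d * d).
  rewrite e.
  have : exp (-1) * ((1 + d) * (1 - d + d * d)) <= exp (-1) * (exp d * (1 - d + d * d)).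
    apply: Rmult_le_compat_l; first lra.
    apply: Rmult_le_compat_r; [rewrite /d; nra| lra].
  have : exp (-1) <= exp (-1) * ((1 + d) * (1 - d + d * d)).
    have -> : (1 + d) * (1 - d + d * d) = 1 + d * d * d by ring.
    have hd0 : 0 <= d by rewrite /d; lra.
    have : 0 <= d * d * d by apply: Rmult_le_pos; [nra|lra].
    nra.
  lra.
have B : exp (- s) * (d * g) <= g * g.
  have : d * g <= g * g by rewrite /d; nra.
  have : 0 <= d * g by rewrite /d; nra.
  nra.
have -> : s * s + (1 - s) * (1 - g) = (1 - d + d * d) - d * g by rewrite /d; ring.
nra.
Qed.

End V5.
Import V5.


Lemma tex s : s * exp (- s) <= 1.
Proof.
have h1 : 1 + s <= exp s by apply: exp_ineq1_le.
have e : exp s * exp (- s) = 1 by rewrite -exp_plus Rplus_opp_r exp_0.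
have := exp_pos (- s); nra.
Qed.

Theorem theorem2 :
  exists C : R, 0 <= C /\
  forall (n : nat) (u : vec n) (f : vec n -> R) (g : vec n -> vec n) (L : R)
    (P : vec n -> Prop) (D : R) (xstar : vec n) (gamma : R)
    (x v : nat -> vec n) (t : nat -> R) (K : nat),
    (forall i, 0 < u i) ->
    has_gradient u f g ->
    (forall y, in_box u y -> 0 <= f y) ->
    DR_submodular u f ->
    lipschitz_grad u g L ->
    (forall y, P y -> in_box u y) ->
    (exists y, P y) ->
    compact_set P -> convex_set P -> down_closed P ->
    is_diameter P D ->
    P xstar -> (forall y, P y -> f y <= f xstar) ->
    0 < gamma <= 1 ->
    fw_run u P g gamma x v t K ->
    forall k : nat, (1 <= k)%nat -> (k <= K)%nat ->
      f (x k) >= t k * exp (- t k) * f xstar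
                 - L * D ^ 2 / 2 * INR k * gamma ^ 2
                 - C * gamma ^ 2 * f xstar.
Proof.
exists 25; split; first lra.
move=> n u f g L P D xs gam x v t K hu hg hf0 hDR hL hP _ _ _ hdc hdiam hxs _ hgam hrun
  k hk1 hkK.
have [hD [a0 [b0 [_ [_ hDe]]]]] := hdiam.
have F0 : 0 <= f xs := hf0 _ (hP _ hxs).
have [hx0 [ht0 [htlt [htK hst]]]] := hrun.
have hg2 : 0 <= gam ^ 2 by apply: pow2_ge_0.
have hgF : 0 <= gam ^ 2 * f xs by apply: Rmult_le_pos.
have htex := tex (t k).
destruct n as [|n'].
{
  have allEq : forall a b : vec 0, a = b.
    move=> a b; apply: functional_extensionality => -[i hi]; by [].
  have D0 : D = 0.
    by rewrite -hDe /norm /dot big_ord0 sqrt_0.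
  rewrite (allEq (x k) xs) D0.
  have : t k * exp (- t k) * f xs <= f xs.
    have := Rmult_le_compat_r (f xs) _ _ F0 htex; lra.
  have : 0 <= 25 * gam ^ 2 * f xs by nra.
  have -> : L * 0 ^ 2 / 2 * INR k * gam ^ 2 = 0 by field.
  lra. }

have hL0 : 0 <= L.
  case: (Rle_lt_dec 0 L) => // hneg; exfalso.
  have b0' : in_box u (vzero n'.+1) by split => i; rewrite /vzero /=; [lra | have := hu i; lra].
  have bu : in_box u u by split => i; rewrite /vzero /=; have := hu i; lra.
  have := hL _ _ b0' bu.
  have hpos : 0 < norm (vsub (vzero n'.+1) u).
    apply: sqrt_lt_R0; rewrite /dot big_ord_recl.
    have := @sum_ge0 n' (fun i : 'I_n' => vsub (vzero n'.+1) u (lift ord0 i) * vsub (vzero n'.+1) u (lift ord0 i)).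
    move=> /(_ (fun i => ltac:(nra))).
    have := hu ord0; rewrite /vsub /vzero /=; nra.
  have := norm_ge0 (vsub (g (vzero n'.+1)) (g u)).
  nra.
have hDD : 0 <= L * D ^ 2 by apply: Rmult_le_pos => //; apply: pow2_ge_0.
have hDn : forall a b, P a -> P b -> norm (vsub a b) <= D by move=> a b ha hb; exact: hD.
have hvP : forall j, (j < K)%nat -> P (v j) by move=> j hj; have [[? _] _] := hst j hj.
have hv0 : forall j, (j < K)%nat -> forall i, 0 <= v j i.
  move=> j hj i; have [h _] := hP _ (hvP j hj); exact: h.
have hvu : forall j, (j < K)%nat -> forall i, v j i <= u i - x j i.
  move=> j hj i; have [[_ [h _]] _] := hst j hj; exact: h.
have hc : forall j, (j < K)%nat -> 0 <= Rmin gam (1 - t j) <= 1.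
  move=> j hj; have := htlt j hj => h; split.
  - apply: Rmin_glb; lra.
  - have := Rmin_l gam (1 - t j); lra.
have ex : forall j, (j < K)%nat -> x j.+1 = (fun i => x j i + Rmin gam (1 - t j) * v j i).
  move=> j hj; apply: functional_extensionality => i.
  have [_ [h _]] := hst j hj; exact: h.
have hbox : forall j, (j <= K)%nat -> in_box u (x j).
  elim=> [|j IH] hj.
  - split => i; rewrite /vzero /= hx0; [lra | have := hu i; lra].
  - have hj' : (j < K)%nat by [].
    have [b1 b2] := IH (ltnW hj').
    rewrite (ex j hj'); split => i; rewrite /vzero /=.
    + have := b1 i; have := hv0 j hj' i; have := hc j hj'; rewrite /vzero /=; nra.
    + have := b2 i; have := hvu j hj' i; have := hc j hj'; have := hv0 j hj' i; nra.
have hfx : forall j, (j <= K)%nat -> 0 <= f (x j) by move=> j hj; apply: hf0; apply: hbox.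
case: (Rle_lt_dec gam (1/5)) => hg5; last first.
{ have := hfx k hkK.
  have : t k * exp (- t k) * f xs <= f xs.
    have := Rmult_le_compat_r (f xs) _ _ F0 htex; lra.
  have : f xs <= 25 * (gam ^ 2 * f xs).
    have : 1 <= 25 * gam ^ 2 by rewrite /=; nra.
    nra.
  have : 0 <= L * D ^ 2 / 2 * INR k * gam ^ 2.
    have := pos_INR k; move=> hk0.
    apply: Rmult_le_pos => //; apply: Rmult_le_pos => //; lra.
  lra. }

have hcg : forall j, (j.+1 < K)%nat -> Rmin gam (1 - t j) = gam.
  move=> j hj.
  have [_ [_ e]] := hst j (ltnW hj).
  have := htlt j.+1 hj; rewrite e.
  rewrite /Rmin; case: Rle_dec => // hh; lra.
have hT : forall j, (j < K)%nat -> t j = INR j * gam.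
  elim=> [|j IH] hj; first by rewrite ht0 /=; lra.
  have [_ [_ e]] := hst j (ltnW hj).
  rewrite e (hcg j hj) (IH (ltnW hj)) S_INR; lra.
have hK0 : (0 < K)%nat.
  case: K hkK htK hk1 {hst hcg hT htlt hbox hfx hc ex hvP hv0 hvu hrun} => // _ htK.
  by rewrite ht0 in htK; lra.
have hrho : forall j, (j < K)%nat -> forall i, x j i <= (1 - (1 - gam) ^ j) * u i.
  elim=> [|j IH] hj i; first by rewrite hx0 /=; lra.
  have hj' : (j < K)%nat by apply: ltnW.
  rewrite (ex j hj') (hcg j hj) /=.
  have := IH hj' i; have := hvu j hj' i; have := hv0 j hj' i.
  have : 0 <= (1 - gam) ^ j by apply: pow_le; lra.
  have := hu i.
  nra.
have hr01 : forall j, 0 <= (1 - gam) ^ j <= 1.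
  move=> j; split; first by apply: pow_le; lra.
  by have := pow_incr (1 - gam) 1 j ltac:(lra); rewrite pow1.
have STEP : forall j, (j < K)%nat ->
    f (x j.+1) >= (1 - Rmin gam (1 - t j)) * f (x j) + Rmin gam (1 - t j) * (1 - gam) ^ j * f xs
                  - L * (Rmin gam (1 - t j) * Rmin gam (1 - t j)) * (D * D) / 2.
  move=> j hj; rewrite (ex j hj).
  have [[hPv [hvle hmax]] _] := hst j hj.
  apply: (step_ineq xs hg hDR hf0 hL hL0 hP hdc hDn hxs (hbox j (ltnW hj)) hPv hvle hmax (hc j hj) (hr01 j)).
  exact: hrho j hj.
set E := L * D ^ 2 / 2 * gam ^ 2.
have hE0 : 0 <= E by rewrite /E; nra.
have hEe : L * (gam * gam) * (D * D) / 2 = E by rewrite /E /=; field.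
have A : forall m, (m.+1 < K)%nat ->
    f (x m.+1) >= INR m.+1 * gam * (1 - gam) ^ m * f xs - INR m.+1 * E.
  elim=> [|m IH] hm.
  - have := STEP 0%nat (ltnW hm); rewrite (hcg 0%nat hm) hEe /=.
    have := hfx 0%nat (leq0n K).
    nra.
  - have := STEP m.+1 (ltnW hm); rewrite (hcg m.+1 hm) hEe.
    have := IH (ltnW hm).
    move=> h1 h2.
    have h3 : (1 - gam) * f (x m.+1) >= (1 - gam) * (INR m.+1 * gam * (1 - gam) ^ m * f xs - INR m.+1 * E).
      apply: Rle_ge; apply: Rmult_le_compat_l; lra.
    have : 0 <= INR m.+1 by apply: pos_INR.
    rewrite [INR m.+2]S_INR -tech_pow_Rmult in h2 *.
    move=> hm0.
    have : gam * (INR m.+1 * E) >= 0.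
      apply: Rle_ge; apply: Rmult_le_pos; [lra | apply: Rmult_le_pos; lra].
    lra.

have hkcase : (k < K)%nat \/ k = K by lia.
case: hkcase => [hkK'|hkK'].
{ destruct k as [|k']; first by lia.
  have HA := A k' hkK'.
  have htk := hT _ hkK'.
  have hlt := htlt _ hkK'.
  rewrite htk in hlt *.
  have hk'g : INR k' * gam <= 1 by rewrite S_INR in hlt; lra.
  have hpe := pow_exp gam k' (conj (proj1 hgam) hg5) hk'g.
  rewrite S_INR in HA *.
  have hk0 : 0 <= INR k' by apply: pos_INR.
  have hM : (INR k' + 1) * gam * f xs * exp (- ((INR k' + 1) * gam)) <=
            (INR k' + 1) * gam * f xs * (1 - gam) ^ k'.
    apply: Rmult_le_compat_l => //.
    apply: Rmult_le_pos => //; apply: Rmult_le_pos; lra.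
  rewrite /E in HA.
  lra. }
subst k.
destruct K as [|[|m]]; first by [].
{ have [_ [_ e]] := hst 0%nat isT.
  rewrite htK ht0 in e.
  have := Rmin_l gam (1 - 0); lra. }
have HA := A m (ltnSn _).
have [_ [_ e]] := hst m.+1 (ltnSn _).
rewrite htK in e.
have hs := hT m.+1 (ltnSn _).
have hlt := htlt m.+1 (ltnSn _).
have STm := STEP m.+1 (ltnSn _).
have hcm : Rmin gam (1 - t m.+1) = 1 - t m.+1 by lra.
have hdg : 1 - t m.+1 <= gam by rewrite -hcm; apply: Rmin_l.
rewrite hcm hs in STm.
rewrite hs in hlt hdg.
rewrite htK.
rewrite S_INR in HA STm hlt hdg *.
rewrite S_INR.
set s := (INR m + 1) * gam in HA STm hlt hdg *.
have hm0 : 0 <= INR m by apply: pos_INR.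
have hs0 : 0 <= s by rewrite /s; nra.
have hmg : INR m * gam <= 1 by rewrite /s in hlt; nra.
have hpe := pow_exp gam m (conj (proj1 hgam) hg5) hmg.
rewrite -/s in hpe.
have hfr := final_real gam s (proj1 hgam) (conj hs0 (Rlt_le _ _ hlt)) hdg.
set r := (1 - gam) ^ m in HA hpe *.
rewrite -tech_pow_Rmult -/r in STm.
set br := s * s + (1 - s) * (1 - gam) in hfr.
have hbr : 0 <= br by rewrite /br; nra.
have H1 : exp (- s) * br * f xs <= r * br * f xs.
  apply: Rmult_le_compat_r => //; apply: Rmult_le_compat_r => //.
have H2 : (exp (-1) - gam * gam) * f xs <= exp (- s) * br * f xs.
  by apply: Rmult_le_compat_r.
have H3 : L * ((1 - s) * (1 - s)) * (D * D) / 2 <= E.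
  rewrite /E /=.
  have : (1 - s) * (1 - s) <= gam * gam by nra.
  have : 0 <= L * (D * (D * 1)) by rewrite /= in hDD; lra.
  nra.
have H4 : s * f (x m.+1) >= s * (s * r * f xs - (INR m + 1) * E).
  apply: Rle_ge; apply: Rmult_le_compat_l; lra.
have H5 : s * ((INR m + 1) * E) <= (INR m + 1) * E.
  have : 0 <= (INR m + 1) * E by apply: Rmult_le_pos; lra.
  nra.
have H6 : gam * gam * f xs <= gam ^ 2 * f xs by rewrite /=; lra.
rewrite /br in H1 H2.
rewrite /E in H3 H5 H4 STm.
have H7 : 0 <= gam ^ 2 * f xs := hgF.
have ee : exp (- (1)) = exp (-1) by f_equal; lra.
rewrite ee S_INR.
lra.
Qed.
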